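(* Let $(X,d)$ be a metric space, $\mu$ a non-atomic Borel measure on $X$, $m$ a Borel measure on $X$, $0<p<\infty$, and $E\subset X$ a Borel set with $m(E)=0$. Then $\mathrm{Mod}_p(\Gamma_E^+)=0$, where $\Gamma_E^+=\{\gamma\in\Gamma^\mu:\mu(\mathrm{Im}(\gamma)\cap E)>0\}$.
   Context: A path is a continuous map $\gamma:[a,b]\to X$; a subpath is a restriction to a subinterval, trivial if that interval is a point; $\mathrm{Im}(\gamma)=\gamma([a,b])$. $\mu$ non-atomic: $\mu(\{x\})=0$ for all $x$. $\Gamma^\mu$ is the set of all non-trivial injective paths $\gamma$ with $0<\mu(\mathrm{Im}(\tilde\gamma))<\infty$ for every non-trivial subpath $\tilde\gamma$. For Borel $g\ge0$, $\int_\gamma g:=\int_{\mathrm{Im}(\gamma)}g\,d\mu$. For $\Gamma\subset\Gamma^\mu$, $\mathrm{Mod}_p(\Gamma)=\inf\int_Xg^p\,dm$ over Borel $g:X\to[0,\infty]$ with $\int_\gamma g\ge1$ for all $\gamma\in\Gamma$. *)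

(* Defs.v *)
From HB Require Import structures.
From mathcomp Require Import all_boot all_order all_algebra.
From mathcomp Require Import all_classical all_reals all_analysis.
From mathcomp Require Import measurable_realfun.
Set Implicit Arguments. Unset Strict Implicit. Unset Printing Implicit Defensive.
Import Order.TTheory GRing.Theory Num.Theory.
Import numFieldNormedType.Exports.
Local Open Scope classical_set_scope.
Local Open Scope ring_scope.

(* Metric spaces equipped with a distinguished point (mathcomp-analysis
   measurable types are pointed, i.e. nonempty). *)
#[short(type="pmetricType")]
HB.structure Definition PointedMetric (K : numDomainType) :=
  { M of Pointed M & Metric K M }.

Notation Borel X := (g_sigma_algebraType (@open X)).

Section Defs.
Context {R : realType} {X : pmetricType R}.

(* A (candidate) path: a parameter interval [a,b] and a map gamma; only the
   values of gamma on [a,b] are relevant. *)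
Record path := Path { pa : R ; pb : R ; pf : R -> X }.

Definition is_path (g : path) : Prop :=
  pa g <= pb g /\ {within `[pa g, pb g], continuous (pf g)}.

Definition Im (g : path) : set (Borel X) := pf g @` `[pa g, pb g].

Definition injective_path (g : path) : Prop :=
  {in `[pa g, pb g] &, injective (pf g)}.

Definition nontrivial (g : path) : Prop := pa g < pb g.

Definition subpath (g : path) (c d : R) : path := Path c d (pf g).

Definition Gamma_mu (mu : {measure set (Borel X) -> \bar R}) : set path :=
  [set g | is_path g /\ nontrivial g /\ injective_path g /\
     forall c d, pa g <= c -> c < d -> d <= pb g ->
       (0 < mu (Im (subpath g c d)))%E /\ (mu (Im (subpath g c d)) < +oo)%E].

Definition line_int (mu : {measure set (Borel X) -> \bar R}) (g : path)
  (rho : Borel X -> \bar R) : \bar R :=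
  (\int[mu]_(x in Im g) rho x)%E.

Definition admissible (mu : {measure set (Borel X) -> \bar R}) (G : set path)
  (rho : Borel X -> \bar R) : Prop :=
  measurable_fun (setT : set (Borel X)) rho /\ (forall x, 0 <= rho x)%E /\
  (forall g, G g -> 1 <= line_int mu g rho)%E.

Definition Mod (p : R) (mu m : {measure set (Borel X) -> \bar R}) (G : set path)
  : \bar R :=
  ereal_inf [set (\int[m]_x (poweR (rho x) p))%E | rho in admissible mu G].

Definition non_atomic (mu : {measure set (Borel X) -> \bar R}) : Prop :=
  forall x : Borel X, mu [set x] = 0%E.

Definition Gamma_E_plus (mu : {measure set (Borel X) -> \bar R}) (E : set (Borel X))
  : set path :=
  [set g | Gamma_mu mu g /\ (0 < mu (Im g `&` E))%E].

End Defs.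

(* Main.v *)
Require Import Defs.
From HB Require Import structures.
From mathcomp Require Import all_boot all_order all_algebra.
From mathcomp Require Import all_classical all_reals all_analysis.
From mathcomp Require Import measurable_realfun.
Import Order.TTheory GRing.Theory Num.Theory.
Import numFieldNormedType.Exports.
Local Open Scope classical_set_scope.
Local Open Scope ring_scope.

Lemma Im_meas (R : realType) (X : pmetricType R) (g : @Defs.path R X) :
  Defs.is_path g -> measurable (Defs.Im g).
Proof.
move=> [_ cg].
have cA : compact (pf g @` `[pa g, pb g]) by apply: continuous_compact => //; exact: segment_compact.
have cl : closed (pf g @` `[pa g, pb g]) by apply: compact_closed => //; exact: metric_hausdorff.
rewrite /Defs.Im.
have : measurable (~` (~` (pf g @` `[pa g, pb g]) : set (Borel X))).
  apply: measurableC. apply: sub_gen_smallest. by rewrite /= -closedC setCK.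
by rewrite setCK.
Qed.

Local Open Scope ereal_scope.
Lemma rho_meas (R : realType) (X : pmetricType R) (E : set (Borel X)) :
  measurable E -> measurable_fun setT (fun x : Borel X => if x \in E then +oo else 0 : \bar R).
Proof.
move=> mE _ B mB; rewrite setTI.
set f := (fun x : Borel X => if x \in E then +oo else 0 : \bar R).
have [iB|iB] := boolP (+oo \in B); have [zB|zB] := boolP (0%E \in B).
- suff -> : f @^-1` B = setT by [].
  by apply/seteqP; split => // x _ /=; rewrite /f; case: ifP => _; apply/set_mem.
- suff -> : f @^-1` B = E by [].
  apply/seteqP; split => x /=; rewrite /f; case: ifPn => xE H //=.
  all: try first [ exact: (set_mem xE) | exact: (set_mem H) | by apply/set_mem
    | (by move/mem_set: H; rewrite ?(negbTE zB) ?(negbTE iB))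
    | (by move: xE; rewrite (mem_set H))
    | (by move=> Ex; move: xE; rewrite (mem_set Ex)) | (by exfalso; apply: H; apply/set_mem) ].
- suff -> : f @^-1` B = ~` E by exact: measurableC.
  apply/seteqP; split => x /=; rewrite /f; case: ifPn => xE H //=.
  all: try first [ exact: (set_mem xE) | exact: (set_mem H) | by apply/set_mem
    | (by move/mem_set: H; rewrite ?(negbTE zB) ?(negbTE iB))
    | (by move: xE; rewrite (mem_set H))
    | (by move=> Ex; move: xE; rewrite (mem_set Ex)) | (by exfalso; apply: H; apply/set_mem) ].
- suff -> : f @^-1` B = set0 by [].
  apply/seteqP; split => x //=; rewrite /f; case: ifPn => _ /mem_set.
  + by rewrite (negbTE iB).
  + by rewrite (negbTE zB).
Qed.

Local Close Scope ereal_scope.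
Theorem lemma3p4 (R : realType) (X : pmetricType R)
  (mu m : {measure set (Borel X) -> \bar R}) (p : R) (E : set (Borel X)) :
  non_atomic mu -> 0 < p -> measurable E -> m E = 0%E ->
  Mod p mu m (Gamma_E_plus mu E) = 0%E.
Proof.
Local Open Scope ereal_scope.
move=> _ p0 mE mE0.
set f := (fun x : Borel X => if x \in E then +oo else 0 : \bar R).
have f0 : forall x, 0 <= f x by move=> x; rewrite /f; case: ifP.
have mf := @rho_meas R X E mE.
have adm : admissible mu (Gamma_E_plus mu E) f.
  split; first exact: mf.
  split; first exact: f0.
  move=> g [[pg _] pos].
  have mI := @Im_meas R X g pg.
  rewrite /line_int.
  have sub : \int[mu]_(x in Defs.Im g `&` E) f x <= \int[mu]_(x in Defs.Im g) f x.
    apply: ge0_subset_integral => //; [exact: measurableI | exact: measurable_funS mf].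
  apply: le_trans sub.
  rewrite (eq_integral (cst +oo)); last first.
    by move=> x /set_mem [_ Ex]; rewrite /f (mem_set Ex).
  rewrite integral_cst; last exact: measurableI.
  by rewrite gt0_mulye // leey.
apply/eqP; rewrite eq_le; apply/andP; split.
  apply: (@le_trans _ _ (\int[m]_x (poweR (f x) p))).
    by apply: ereal_inf_lbound; exists f.
  have p0' : p != 0%R by rewrite gt_eqF.
  rewrite (eq_integral f); last first.
    by move=> x _; rewrite /f; case: ifP => _; rewrite ?poweRyr ?poweR0r.
  have ae : ae_eq m setT f (cst 0).
    exists E; split => // x /= H; apply/set_mem/negPn/negP => nE.
    by apply: H => _; rewrite /f (negbTE nE).
  rewrite (ge0_ae_eq_integral _ _ _ _ _ ae) //.
  by rewrite integral0.
apply: le_ereal_inf_tmp => _ [rho [_ [r0 _]] <-].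
by apply: integral_ge0 => x _; exact: poweR_ge0.
Qed.
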